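(* Let $\Omega\subset\mathbb{R}^2$ be a bounded open convex set containing the origin, satisfying $\sup_{\theta\in S^1}\sup_{\delta>0}\delta^{-1/2}\mu(\theta,\delta)<\infty$. Let $10\le r\le R<\infty$ and $R^{1/2}\le h\le R$. Let $J$ be a closed line segment whose endpoints lie in $\mathbb{Z}^2$, let $\mathbb{J}=J\cap\mathbb{Z}^2$, and assume $\mathrm{card}(\mathbb{J})\ge10$ and that the ninefold dilate $9J$ (the segment concentric with and parallel to $J$ of $9$ times its length) is contained in $\mathcal{A}(r,h)$. Let $d=d(\mathbb{J})$ be the distance between consecutive lattice points on $J$ and $$\mathcal{T}(\mathbb{J})=R^{3/4}d^{1/2}h^{-1/2}r^{-1/4}.$$ Then, with an implicit constant depending only on $\Omega$, $$\sqrt{Rr}\sum_{\ell\in\mathbb{J}}\mu\big(\tfrac{\ell}{|\ell|},\tfrac1{R|\ell|}\big)\lesssim\begin{cases}\big(\frac{Rr}{h^2d^2}\big)^{1/4}&\text{if }\mathrm{card}(\mathbb{J})\le\mathcal{T}(\mathbb{J}),\\[2pt] \big(\frac{r\,\mathrm{card}(\mathbb{J})}{hd^2}\big)^{1/3}&\text{if }\mathrm{card}(\mathbb{J})\ge\mathcal{T}(\mathbb{J}).\end{cases}$$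
   Context: $\rho^*(\xi)=\sup\{\langle x,\xi\rangle:x\in\Omega\}$. For $\theta\in S^1$, $\delta>0$ let $\mu(\theta,\delta)=\mathrm{diam}\{x\in\partial\Omega:\langle x,\theta\rangle=\rho^*(\theta)-\delta\}$ (diameter of the empty set is $0$). The annulus is $\mathcal{A}(r,h)=\{x\in\mathbb{R}^2:r\le\rho^*(x)\le r+h^{-1}\}$. *)

(* Defs.v *)
From Stdlib Require Import Reals Lra ZArith List.
From Coquelicot Require Import Coquelicot.
Open Scope R_scope.

Definition pt := (R * R)%type.
Definition dot (x y : pt) : R := fst x * fst y + snd x * snd y.
Definition nrm (x : pt) : R := sqrt (dot x x).
Definition psub (x y : pt) : pt := (fst x - fst y, snd x - snd y).
Definition padd (x y : pt) : pt := (fst x + fst y, snd x + snd y).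
Definition pscal (c : R) (x : pt) : pt := (c * fst x, c * snd x).
Definition pdist (x y : pt) : R := nrm (psub x y).

Definition ptZ (z : Z * Z) : pt := (IZR (fst z), IZR (snd z)).

Definition is_open (O : pt -> Prop) : Prop :=
  forall x, O x -> exists e, 0 < e /\ forall y, pdist y x < e -> O y.
Definition is_convex (O : pt -> Prop) : Prop :=
  forall x y t, O x -> O y -> 0 <= t <= 1 -> O (padd (pscal (1 - t) x) (pscal t y)).
Definition is_bounded (O : pt -> Prop) : Prop :=
  exists M, forall x, O x -> nrm x <= M.

Definition closure (O : pt -> Prop) (x : pt) : Prop :=
  forall e, 0 < e -> exists y, O y /\ pdist y x < e.
Definition interior (O : pt -> Prop) (x : pt) : Prop :=
  exists e, 0 < e /\ forall y, pdist y x < e -> O y.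
Definition boundary (O : pt -> Prop) (x : pt) : Prop :=
  closure O x /\ ~ interior O x.

(* Real supremum of a set of reals (used only on nonempty bounded sets;
   Lub_Rbar of the empty set is m_infty, whose real part is 0). *)
Definition sup_R (E : R -> Prop) : R := real (Lub_Rbar E).

Definition rho_star (O : pt -> Prop) (xi : pt) : R :=
  sup_R (fun v => exists x, O x /\ v = dot x xi).

(* diameter, with diam of the empty set equal to 0 *)
Definition diam (S : pt -> Prop) : R :=
  sup_R (fun v => exists x y, S x /\ S y /\ v = pdist x y).

Definition mu (O : pt -> Prop) (theta : pt) (delta : R) : R :=
  diam (fun x => boundary O x /\ dot x theta = rho_star O theta - delta).

Definition annulus (O : pt -> Prop) (r h : R) (x : pt) : Prop :=
  r <= rho_star O x <= r + / h.

Definition segment (a b : pt) (x : pt) : Prop :=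
  exists t, 0 <= t <= 1 /\ x = padd a (pscal t (psub b a)).

Definition dilate9 (a b : pt) (x : pt) : Prop :=
  exists s, -9/2 <= s <= 9/2 /\
    x = padd (pscal (1/2) (padd a b)) (pscal s (psub b a)).

Definition consecutive (a b : pt) (p q : Z * Z) : Prop :=
  segment a b (ptZ p) /\ segment a b (ptZ q) /\ p <> q /\
  forall z : Z * Z, segment a b (ptZ z) -> z <> p -> z <> q ->
    ~ (exists t, 0 < t < 1 /\ ptZ z = padd (ptZ p) (pscal t (psub (ptZ q) (ptZ p)))).

Definition sum_list (f : Z * Z -> R) (L : list (Z * Z)) : R :=
  fold_right (fun z acc => f z + acc) 0 L.

(* Main.v *)
Require Import Defs.
From Stdlib Require Import Reals Lra Lia ZArith List Permutation Psatz.
From Coquelicot Require Import Coquelicot.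
Open Scope R_scope.

Lemma sup_R_ub (E : R -> Prop) (B v : R) :
  (forall w, E w -> w <= B) -> E v -> v <= sup_R E.
Proof.
  intros HB Hv. unfold sup_R.
  destruct (Lub_Rbar_correct E) as [Hub Hlub].
  assert (H1 := Hub v Hv).
  assert (H2 : Rbar_le (Lub_Rbar E) B) by (apply Hlub; intros w Hw; simpl; apply HB; auto).
  destruct (Lub_Rbar E); simpl in *; tauto.
Qed.

Lemma sup_R_lub (E : R -> Prop) (c : R) :
  (exists v, E v) -> (forall w, E w -> w <= c) -> sup_R E <= c.
Proof.
  intros [v Hv] HB. unfold sup_R.
  destruct (Lub_Rbar_correct E) as [Hub Hlub].
  assert (H1 := Hub v Hv).
  assert (H2 : Rbar_le (Lub_Rbar E) c) by (apply Hlub; intros w Hw; simpl; apply HB; auto).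
  destruct (Lub_Rbar E); simpl in *; tauto.
Qed.

Lemma sup_R_le0 (E : R -> Prop) (c : R) :
  0 <= c -> (forall w, E w -> w <= c) -> sup_R E <= c.
Proof.
  intros Hc HB. unfold sup_R.
  destruct (Lub_Rbar_correct E) as [Hub Hlub].
  assert (H2 : Rbar_le (Lub_Rbar E) c) by (apply Hlub; intros w Hw; simpl; apply HB; auto).
  destruct (Lub_Rbar E); simpl in *; tauto.
Qed.

Lemma dot_self_nonneg (x : pt) : 0 <= dot x x.
Proof. destruct x; unfold dot; simpl; nra. Qed.

Lemma nrm_nonneg x : 0 <= nrm x.
Proof. unfold nrm; apply sqrt_pos. Qed.

Lemma nrm_sq x : nrm x * nrm x = dot x x.
Proof. unfold nrm; apply sqrt_def, dot_self_nonneg. Qed.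

Lemma CS_sq (x y : pt) : dot x y * dot x y <= dot x x * dot y y.
Proof. destruct x as [a b], y as [c e]; unfold dot; simpl. assert (0 <= (a*e - b*c)*(a*e-b*c)) by apply Rle_0_sqr. nra. Qed.

Lemma CS_abs (x y : pt) : Rabs (dot x y) <= nrm x * nrm y.
Proof.
  assert (H := CS_sq x y).
  assert (Hx := nrm_sq x). assert (Hy := nrm_sq y).
  assert (0 <= nrm x) by apply nrm_nonneg. assert (0 <= nrm y) by apply nrm_nonneg.
  apply Rsqr_incr_0_var; unfold Rsqr.
  - rewrite <- Rabs_mult, Rabs_right by (apply Rle_ge; nra). nra.
  - nra.
Qed.

Lemma abs_le_both x y : Rabs x <= y -> -y <= x <= y.
Proof. intros H. unfold Rabs in H; destruct (Rcase_abs x); lra. Qed.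

Lemma CS (x y : pt) : dot x y <= nrm x * nrm y.
Proof. eapply Rle_trans; [apply Rle_abs | apply CS_abs]. Qed.

Definition bddM (O : pt -> Prop) (M : R) := forall y, O y -> nrm y <= M.

Lemma rho_ub O M x y : bddM O M -> O y -> dot y x <= rho_star O x.
Proof.
  intros HM Hy. unfold rho_star. apply (sup_R_ub _ (M * nrm x)).
  - intros w [z [Hz ->]]. eapply Rle_trans; [apply CS|].
    apply Rmult_le_compat_r; [apply nrm_nonneg| auto].
  - exists y; auto.
Qed.

Lemma rho_lub O x c : O (0,0) -> (forall y, O y -> dot y x <= c) -> rho_star O x <= c.
Proof.
  intros H0 H. unfold rho_star. apply sup_R_lub.
  - exists (dot (0,0) x); exists (0,0); auto.
  - intros w [z [Hz ->]]; auto.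
Qed.

Lemma dot_psub (z y x : pt) : dot (psub z y) x = dot z x - dot y x.
Proof. destruct z, y, x; unfold dot, psub; simpl; ring. Qed.

Lemma rho_cl O M x y : bddM O M -> closure O y -> dot y x <= rho_star O x.
Proof.
  intros HM Hy.
  destruct (Rle_or_lt (dot y x) (rho_star O x)) as [H|H]; auto.
  set (g := dot y x - rho_star O x).
  assert (Hg : 0 < g) by (unfold g; lra).
  assert (Hn := nrm_nonneg x).
  destruct (Hy (g / (nrm x + 1))) as [z [Hz Hd]].
  { apply Rdiv_lt_0_compat; lra. }
  assert (H1 := rho_ub O M x z HM Hz).
  assert (H2 := CS_abs (psub z y) x).
  rewrite dot_psub in H2. unfold pdist in Hd.
  assert (H3 : nrm (psub z y) * nrm x <= g / (nrm x + 1) * nrm x).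
  { apply Rmult_le_compat_r; lra. }
  assert (H4 : g / (nrm x + 1) * nrm x <= g).
  { unfold Rdiv. rewrite Rmult_assoc. rewrite <- (Rmult_1_r g) at 2.
    apply Rmult_le_compat_l; [lra|].
    rewrite Rmult_comm. apply (Rmult_le_reg_r (nrm x + 1)); [lra|].
    rewrite Rmult_assoc, Rinv_l by lra. lra. }
  assert (H5 : nrm (psub z y) * nrm x < g).
  { destruct (Req_dec (nrm x) 0) as [E|E].
    - rewrite E; lra.
    - assert (nrm (psub z y) * nrm x < g / (nrm x + 1) * nrm x).
      { apply Rmult_lt_compat_r; lra. }
      lra. }
  apply Rabs_le_between' in H2. unfold g in *. lra.
Qed.

Lemma dot_pscal_r (y x : pt) c : dot y (pscal c x) = c * dot y x.
Proof. destruct y, x; unfold dot, pscal; simpl; ring. Qed.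
Lemma dot_pscal_l (y x : pt) c : dot (pscal c y) x = c * dot y x.
Proof. destruct y, x; unfold dot, pscal; simpl; ring. Qed.
Lemma dot_padd_r (y u w : pt) : dot y (padd u w) = dot y u + dot y w.
Proof. destruct y, u, w; unfold dot, padd; simpl; ring. Qed.
Lemma dot_comm (x y : pt) : dot x y = dot y x.
Proof. destruct x, y; unfold dot; simpl; ring. Qed.

Lemma rho_hom O M x c : bddM O M -> O (0,0) -> 0 < c ->
  rho_star O (pscal c x) = c * rho_star O x.
Proof.
  intros HM H0 Hc. apply Rle_antisym.
  - apply rho_lub; auto. intros y Hy. rewrite dot_pscal_r.
    apply Rmult_le_compat_l; [lra|]. eapply rho_ub; eauto.
  - assert (rho_star O x <= rho_star O (pscal c x) / c).
    { apply rho_lub; auto. intros y Hy.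
      assert (H := rho_ub O M (pscal c x) y HM Hy). rewrite dot_pscal_r in H.
      apply (Rmult_le_reg_l c); [lra|]. unfold Rdiv.
      rewrite <- Rmult_assoc, (Rmult_comm c (rho_star _ _)), Rmult_assoc, Rinv_r by lra. lra. }
    apply (Rmult_le_compat_l c) in H; [|lra]. unfold Rdiv in H.
    rewrite (Rmult_comm (rho_star _ _)), <- Rmult_assoc, Rinv_r, Rmult_1_l in H by lra. lra.
Qed.

Lemma nrm_pscal c x : nrm (pscal c x) = Rabs c * nrm x.
Proof.
  unfold nrm. rewrite <- sqrt_Rsqr_abs, <- sqrt_mult_alt by apply Rle_0_sqr.
  f_equal. destruct x; unfold dot, pscal, Rsqr; simpl; ring.
Qed.

Lemma rho_lower O M e0 x : bddM O M -> O (0,0) -> 0 < e0 ->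
  (forall y, pdist y (0,0) < e0 -> O y) -> e0 / 2 * nrm x <= rho_star O x.
Proof.
  intros HM H0 He Hb.
  destruct (Req_dec (nrm x) 0) as [E|E].
  - rewrite E, Rmult_0_r. replace 0 with (dot (0,0) x) by (destruct x; unfold dot; simpl; ring).
    eapply rho_ub; eauto.
  - assert (Hp : 0 < nrm x) by (assert (H:=nrm_nonneg x); lra).
    set (y := pscal (e0 / (2 * nrm x)) x).
    assert (Hy : O y).
    { apply Hb. unfold pdist. replace (psub y (0,0)) with y
        by (unfold y, psub, pscal; destruct x; simpl; f_equal; ring).
      unfold y. rewrite nrm_pscal, Rabs_right.
      2: { apply Rle_ge, Rlt_le, Rdiv_lt_0_compat; lra. }
      field_simplify; lra. }
    assert (H := rho_ub O M x y HM Hy). unfold y in H.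
    rewrite dot_pscal_l, <- nrm_sq in H.
    replace (e0 / (2 * nrm x) * (nrm x * nrm x)) with (e0 / 2 * nrm x) in H by (field; lra).
    auto.
Qed.

Lemma rho_upper O M x : bddM O M -> O (0,0) -> rho_star O x <= M * nrm x.
Proof.
  intros HM H0. apply rho_lub; auto. intros y Hy.
  eapply Rle_trans; [apply CS|]. apply Rmult_le_compat_r; [apply nrm_nonneg|auto].
Qed.

Lemma rho_perturb O M u w : bddM O M -> O (0,0) ->
  rho_star O u <= rho_star O (padd u w) + M * nrm w.
Proof.
  intros HM H0. apply rho_lub; auto. intros y Hy.
  assert (H1 := rho_ub O M (padd u w) y HM Hy). rewrite dot_padd_r in H1.
  assert (H2 := CS_abs y w). apply abs_le_both in H2.
  assert (nrm y * nrm w <= M * nrm w) by (apply Rmult_le_compat_r; [apply nrm_nonneg|auto]).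
  lra.
Qed.

Definition Pt (a e : pt) (t : R) : pt := padd a (pscal t e).

Lemma rho_conv O M a e t s : bddM O M -> O (0,0) ->
  2 * rho_star O (Pt a e t) <= rho_star O (Pt a e (t - s)) + rho_star O (Pt a e (t + s)).
Proof.
  intros HM H0.
  assert (rho_star O (Pt a e t) <= (rho_star O (Pt a e (t - s)) + rho_star O (Pt a e (t + s)))/2).
  { apply rho_lub; auto. intros y Hy.
    assert (H1 := rho_ub O M (Pt a e (t-s)) y HM Hy).
    assert (H2 := rho_ub O M (Pt a e (t+s)) y HM Hy).
    unfold Pt in *. rewrite dot_padd_r, dot_pscal_r in *. lra. }
  lra.
Qed.

Definition det2 (x y : pt) : R := fst x * snd y - snd x * fst y.

Lemma perp_id (w l e : pt) : dot w l = 0 -> 0 < dot l l ->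
  dot w e * dot w e * dot l l = dot w w * (det2 l e * det2 l e).
Proof.
  destruct w as [w1 w2], l as [l1 l2], e as [e1 e2]; unfold dot, det2; simpl.
  intros H Hl.
  set (p := - l2 * w1 + l1 * w2).
  assert (A : (w1*e1 + w2*e2) * (l1*l1+l2*l2) = (l1*e1+l2*e2)*(w1*l1+w2*l2) + (l1*e2-l2*e1)*p)
    by (unfold p; ring).
  assert (B : (w1*w1+w2*w2)*(l1*l1+l2*l2) = (w1*l1+w2*l2)*(w1*l1+w2*l2) + p*p) by (unfold p; ring).
  rewrite H in A, B. rewrite Rmult_0_r, Rplus_0_l in A. rewrite Rmult_0_r, Rplus_0_l in B.
  apply (Rmult_eq_reg_r (l1*l1+l2*l2)); [|lra].
  replace ((w1 * e1 + w2 * e2) * (w1 * e1 + w2 * e2) * (l1 * l1 + l2 * l2) * (l1 * l1 + l2 * l2))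
    with (((w1*e1 + w2*e2) * (l1*l1+l2*l2)) * ((w1*e1 + w2*e2) * (l1*l1+l2*l2))) by ring.
  rewrite A.
  replace ((w1 * w1 + w2 * w2) * ((l1 * e2 - l2 * e1) * (l1 * e2 - l2 * e1)) * (l1 * l1 + l2 * l2))
    with (((w1 * w1 + w2 * w2) * (l1 * l1 + l2 * l2)) * ((l1 * e2 - l2 * e1) * (l1 * e2 - l2 * e1))) by ring.
  rewrite B. ring.
Qed.

Lemma nrm_perp_bound (w l e : pt) (B : R) : dot w l = 0 -> 0 < nrm l -> det2 l e <> 0 ->
  Rabs (dot w e) <= B -> nrm w <= B * nrm l / Rabs (det2 l e).
Proof.
  intros H Hl Hd HB.
  assert (Hll : 0 < dot l l) by (rewrite <- nrm_sq; nra).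
  assert (E := perp_id w l e H Hll).
  assert (Hda : 0 < Rabs (det2 l e)) by (apply Rabs_pos_lt; auto).
  assert (Hw := nrm_nonneg w).
  assert (HB0 : 0 <= B) by (eapply Rle_trans; [apply Rabs_pos|eauto]).
  apply (Rmult_le_reg_r (Rabs (det2 l e))); [auto|].
  unfold Rdiv; rewrite Rmult_assoc, Rinv_l, Rmult_1_r by lra.
  assert (Heq : nrm w * Rabs (det2 l e) = Rabs (dot w e) * nrm l).
  { apply Rsqr_inj.
    - apply Rmult_le_pos; auto; apply Rabs_pos.
    - apply Rmult_le_pos; [apply Rabs_pos| lra].
    - unfold Rsqr. replace (nrm w * Rabs (det2 l e) * (nrm w * Rabs (det2 l e)))
        with ((nrm w * nrm w) * (Rabs (det2 l e) * Rabs (det2 l e))) by ring.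
      replace (Rabs (dot w e) * nrm l * (Rabs (dot w e) * nrm l))
        with ((Rabs (dot w e) * Rabs (dot w e)) * (nrm l * nrm l)) by ring.
      rewrite <- !Rabs_mult, !Rabs_right by (apply Rle_ge; apply Rle_0_sqr).
      rewrite !nrm_sq. lra. }
  rewrite Heq. apply Rmult_le_compat_r; lra.
Qed.

Lemma dot_Pt y a e t : dot y (Pt a e t) = dot y a + t * dot y e.
Proof. unfold Pt; rewrite dot_padd_r, dot_pscal_r; ring. Qed.

Lemma slice_eq O M (l y : pt) R0 : bddM O M -> O (0,0) -> 0 < R0 -> 0 < nrm l ->
  dot y (pscal (/ nrm l) l) = rho_star O (pscal (/ nrm l) l) - / (R0 * nrm l) ->
  dot y l = rho_star O l - / R0.
Proof.
  intros HM H0 HR Hl E.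
  rewrite dot_pscal_r, (rho_hom O M) in E by (auto; apply Rinv_0_lt_compat; auto).
  apply (Rmult_eq_compat_l (nrm l)) in E.
  rewrite Rmult_minus_distr_l, <- !Rmult_assoc, Rinv_r, !Rmult_1_l in E by lra.
  rewrite E. field. lra.
Qed.

Lemma mu_bound O M a e k j R0 : bddM O M -> O (0,0) -> 0 < R0 -> 0 < j ->
  0 < nrm (Pt a e k) -> det2 (Pt a e k) e <> 0 ->
  mu O (pscal (/ nrm (Pt a e k)) (Pt a e k)) (/ (R0 * nrm (Pt a e k))) <=
   ((rho_star O (Pt a e (k+j)) + rho_star O (Pt a e (k-j)) - 2 * rho_star O (Pt a e k) + 2 / R0) / j)
     * nrm (Pt a e k) / Rabs (det2 (Pt a e k) e).
Proof.
  intros HM H0 HR Hj Hl Hd.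
  set (l := Pt a e k) in *.
  set (G := rho_star O (Pt a e (k+j)) + rho_star O (Pt a e (k-j)) - 2 * rho_star O l).
  assert (HG : 0 <= G).
  { unfold G, l. assert (H := rho_conv O M a e k j HM H0).
    replace (k + j) with (k + j) by ring. lra. }
  assert (Hda : 0 < Rabs (det2 l e)) by (apply Rabs_pos_lt; auto).
  unfold mu, diam. apply sup_R_le0.
  { unfold Rdiv. repeat apply Rmult_le_pos; try lra.
    - assert (0 < 2 / R0) by (apply Rdiv_lt_0_compat; lra). lra.
    - apply Rlt_le, Rinv_0_lt_compat; lra.
    - apply Rlt_le, Rinv_0_lt_compat; lra. }
  intros v [y1 [y2 [[[C1 _] E1] [[[C2 _] E2] ->]]]].
  apply (slice_eq O M l y1 R0 HM H0 HR Hl) in E1.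
  apply (slice_eq O M l y2 R0 HM H0 HR Hl) in E2.
  assert (A1 := rho_cl O M (Pt a e (k+j)) y1 HM C1).
  assert (A2 := rho_cl O M (Pt a e (k-j)) y1 HM C1).
  assert (A3 := rho_cl O M (Pt a e (k+j)) y2 HM C2).
  assert (A4 := rho_cl O M (Pt a e (k-j)) y2 HM C2).
  unfold pdist. apply nrm_perp_bound; auto.
  - rewrite dot_psub. rewrite E1, E2. ring.
  - rewrite dot_psub. apply Rabs_le. unfold G.
    unfold l in E1, E2. rewrite dot_Pt in E1, E2, A1, A2, A3, A4.
    set (Q := rho_star O (Pt a e (k + j)) + rho_star O (Pt a e (k - j)) - 2 * rho_star O l + 2 / R0).
    assert (HQ : (Q / j) * j = Q) by (field; lra).
    split; apply (Rmult_le_reg_r j); auto; rewrite ?Ropp_mult_distr_l_reverse, HQ; unfold Q; unfold Rdiv in *. unfold l in *; lra.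
unfold l in *; lra.
Qed.

Lemma det_core O M l f s r h eps : bddM O M -> O (0,0) -> 0 < M -> 0 < eps -> 0 < s ->
  0 < nrm l -> 0 < h ->
  eps * nrm l <= rho_star O l -> r <= rho_star O l ->
  rho_star O (padd l (pscal s f)) <= r + / h ->
  0 <= dot f l -> / (h * s) <= eps * nrm f / 8 ->
  Rmin (1/2) (eps / (8 * M)) * nrm f * nrm l <= Rabs (det2 l f).
Proof.
  intros HM H0 HMp He Hs Hn Hh Hl1 Hl2 Hx HA Hhs.
  set (n := nrm l) in *. set (A := dot f l) in *. set (D := det2 l f).
  set (d := nrm f) in *.
  assert (Hd0 : 0 <= d) by apply nrm_nonneg.
  assert (Hnn : n * n = dot l l) by apply nrm_sq.
  assert (Hdd : d * d = dot f f) by apply nrm_sq.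
  assert (Hid : A * A + D * D = d * d * (n * n)).
  { rewrite Hnn, Hdd. unfold A, D, dot, det2. destruct l, f; simpl; ring. }
  set (c := s * A / (n * n)).
  assert (Hc : 0 <= c) by (unfold c; apply Rmult_le_pos; [nra| apply Rlt_le, Rinv_0_lt_compat; nra]).
  set (w := psub (pscal s f) (pscal c l)).
  assert (Hxe : padd (pscal (1 + c) l) w = padd l (pscal s f)).
  { unfold w, padd, psub, pscal. destruct l, f; simpl. f_equal; ring. }
  assert (Hw2 : dot w w * (n * n) = s * s * (D * D)).
  { unfold w, c, A, D. rewrite Hnn. unfold dot, det2, psub, pscal in *. destruct l as [l1 l2], f as [f1 f2]; simpl in *.
    field. intro Z. rewrite Z in Hnn. nra. }
  assert (Hw : nrm w * n = s * Rabs D).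
  { apply Rsqr_inj; [apply Rmult_le_pos; [apply nrm_nonneg|lra] | apply Rmult_le_pos; [lra|apply Rabs_pos] |].
    unfold Rsqr. replace (nrm w * n * (nrm w * n)) with ((nrm w * nrm w) * (n * n)) by ring.
    rewrite nrm_sq, Hw2. replace (s * Rabs D * (s * Rabs D)) with (s * s * (Rabs D * Rabs D)) by ring.
    rewrite <- Rabs_mult, Rabs_right by (apply Rle_ge, Rle_0_sqr). ring. }
  assert (Hp := rho_perturb O M (pscal (1 + c) l) w HM H0).
  rewrite Hxe, (rho_hom O M) in Hp by (auto; lra).
  assert (Hk : c * rho_star O l <= / h + M * nrm w) by nra.
  assert (Hk2 : c * (eps * n) <= c * rho_star O l) by (apply Rmult_le_compat_l; auto).
  assert (Hk3 : s * A * eps <= n / h + M * s * Rabs D).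
  { apply (Rmult_le_reg_r (/ n)). apply Rinv_0_lt_compat; lra.
    replace (s * A * eps * / n) with (c * (eps * n)) by (unfold c; field; lra).
    replace ((n / h + M * s * Rabs D) * / n) with (/h + M * (nrm w * n) * / n) by (rewrite Hw; field; lra).
    replace (M * (nrm w * n) * / n) with (M * nrm w) by (field; lra). lra. }
  assert (Hk4 : A * eps <= n * (eps * d / 8) + M * Rabs D).
  { apply (Rmult_le_reg_l s); [lra|].
    assert (n / h <= s * (n * (eps * d / 8))).
    { replace (n / h) with (s * n * / (h * s)) by (field; lra).
      replace (s * (n * (eps * d / 8))) with (s * n * (eps * d / 8)) by ring.
      apply Rmult_le_compat_l; [nra|lra]. }
    nra. }
  assert (HDa : Rabs D * Rabs D = D * D) by (rewrite <- Rabs_mult, Rabs_right; [ring|apply Rle_ge, Rle_0_sqr]).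
  assert (HD0 := Rabs_pos D).
  destruct (Rle_or_lt (d * n / 2) (Rabs D)) as [Hb|Hb].
  - assert (Rmin (1/2) (eps / (8 * M)) <= 1/2) by apply Rmin_l.
    assert (0 <= d * n) by nra. nra.
  - assert (HA2 : d * n / 2 <= A) by nra.
    assert (Rmin (1/2) (eps / (8 * M)) <= eps / (8 * M)) by apply Rmin_r.
    assert (Hm : eps / (8 * M) * (d * n) <= Rabs D).
    { apply (Rmult_le_reg_l (8 * M)); [lra|].
      replace (8 * M * (eps / (8 * M) * (d * n))) with (eps * d * n) by (field; lra).
      nra. }
    assert (0 <= d * n) by nra. nra.
Qed.

Lemma det_lower O M a e k s r h eps : bddM O M -> O (0,0) -> 0 < M -> 0 < eps -> 0 < s ->
  0 < nrm (Pt a e k) -> 0 < h ->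
  eps * nrm (Pt a e k) <= rho_star O (Pt a e k) -> r <= rho_star O (Pt a e k) ->
  rho_star O (Pt a e (k + s)) <= r + / h -> rho_star O (Pt a e (k - s)) <= r + / h ->
  / (h * s) <= eps * nrm e / 8 ->
  Rmin (1/2) (eps / (8 * M)) * nrm e * nrm (Pt a e k) <= Rabs (det2 (Pt a e k) e).
Proof.
  intros HM H0 HMp He Hs Hn Hh Hl1 Hl2 Hx1 Hx2 Hhs.
  destruct (Rle_or_lt 0 (dot e (Pt a e k))) as [HA|HA].
  - apply (det_core O M _ e s r h eps); auto.
    replace (padd (Pt a e k) (pscal s e)) with (Pt a e (k + s)); auto.
    unfold Pt, padd, pscal; destruct a, e; simpl; f_equal; ring.
  - set (f := pscal (-1) e).
    assert (Hf : nrm f = nrm e) by (unfold f; rewrite nrm_pscal, Rabs_left; lra).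
    assert (Hdf : det2 (Pt a e k) f = - det2 (Pt a e k) e).
    { unfold f, det2, pscal. destruct (Pt a e k), e; simpl; ring. }
    replace (Rabs (det2 (Pt a e k) e)) with (Rabs (det2 (Pt a e k) f)) by (rewrite Hdf, Rabs_Ropp; auto).
    rewrite <- Hf.
    apply (det_core O M _ f s r h eps); auto.
    + replace (padd (Pt a e k) (pscal s f)) with (Pt a e (k - s)); auto.
      unfold f, Pt, padd, pscal; destruct a, e; simpl; f_equal; ring.
    + unfold f. rewrite dot_pscal_l. lra.
    + rewrite Hf; auto.
Qed.

Fixpoint sumN (n : nat) (F : nat -> R) : R :=
  match n with O => 0 | S m => sumN m F + F m end.

Lemma sumN_ext n F G : (forall i, (i < n)%nat -> F i = G i) -> sumN n F = sumN n G.
Proof. induction n; simpl; intros H; auto. rewrite IHn, H; auto. Qed.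

Lemma sumN_le n F G : (forall i, (i < n)%nat -> F i <= G i) -> sumN n F <= sumN n G.
Proof. induction n; simpl; intros H; [lra|]. assert (F n <= G n) by auto. assert (sumN n F <= sumN n G) by auto. lra. Qed.

Lemma sumN_plus n F G : sumN n (fun i => F i + G i) = sumN n F + sumN n G.
Proof. induction n; simpl; [ring|]. rewrite IHn; ring. Qed.

Lemma sumN_minus n F G : sumN n (fun i => F i - G i) = sumN n F - sumN n G.
Proof. induction n; simpl; [ring|]. rewrite IHn; ring. Qed.

Lemma sumN_const n c : sumN n (fun _ => c) = INR n * c.
Proof. induction n; simpl sumN; [simpl; ring|]. rewrite IHn, S_INR; ring. Qed.

Lemma sumN_scal n c F : sumN n (fun i => c * F i) = c * sumN n F.
Proof. induction n; simpl; [ring|]. rewrite IHn; ring. Qed.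

Lemma sumN_split a b F : sumN (a + b) F = sumN a F + sumN b (fun i => F (a + i)%nat).
Proof. induction b; simpl. rewrite Nat.add_0_r; ring. rewrite Nat.add_succ_r; simpl. rewrite IHb; ring. Qed.

Lemma sumN_tele n c (g : nat -> R) : sumN n (fun i => g (c + i + 1)%nat - g (c + i)%nat) = g (c + n)%nat - g c.
Proof.
  induction n; simpl. rewrite Nat.add_0_r; ring.
  rewrite IHn. replace (c + n + 1)%nat with (c + S n)%nat by lia. ring.
Qed.

Lemma sumN_shift n j c (g : nat -> R) :
  sumN n (fun i => g (c + i + j)%nat - g (c + i)%nat) = sumN j (fun i => g (c + i + n)%nat - g (c + i)%nat).
Proof.
  rewrite !sumN_minus.
  assert (E1 := sumN_split j n (fun i => g (c + i)%nat)).
  assert (E2 := sumN_split n j (fun i => g (c + i)%nat)).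
  rewrite Nat.add_comm in E1. rewrite E1 in E2.
  assert (A : sumN n (fun i => g (c + (j + i))%nat) = sumN n (fun i => g (c + i + j)%nat))
    by (apply sumN_ext; intros; f_equal; lia).
  assert (B : sumN j (fun i => g (c + (n + i))%nat) = sumN j (fun i => g (c + i + n)%nat))
    by (apply sumN_ext; intros; f_equal; lia).
  rewrite A, B in E2. lra.
Qed.

Lemma sumN_ge_const n c F : (forall i, (i < n)%nat -> c <= F i) -> INR n * c <= sumN n F.
Proof. intros H. rewrite <- sumN_const. apply sumN_le; auto. Qed.
Lemma sumN_le_const n c F : (forall i, (i < n)%nat -> F i <= c) -> sumN n F <= INR n * c.
Proof. intros H. rewrite <- sumN_const. apply sumN_le; auto. Qed.


Lemma D_mono (g : nat -> R) (Kn : nat) :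
  (forall n, (n + 2 <= 9 * Kn)%nat -> 2 * g (S n) <= g n + g (S (S n))) ->
  forall m n, (n <= m)%nat -> (m + 2 <= 9 * Kn)%nat -> g (S n) - g n <= g (S m) - g m.
Proof.
  intros Hc. induction m; intros n Hnm Hm.
  - assert (n = 0%nat) by lia. subst. lra.
  - destruct (Nat.eq_dec n (S m)) as [->|Hne]; [lra|].
    assert (H1 := IHm n ltac:(lia) ltac:(lia)).
    assert (H2 := Hc m ltac:(lia)). lra.
Qed.

Lemma window_bound (g : nat -> R) (Kn : nat) (r eps : R) :
  (forall n, (n <= 9 * Kn)%nat -> r <= g n <= r + eps) ->
  (forall n, (n + 2 <= 9 * Kn)%nat -> 2 * g (S n) <= g n + g (S (S n))) ->
  forall c0 j, (3 * Kn <= c0 + 1)%nat -> (c0 + j <= 6 * Kn)%nat ->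
  - (INR j * eps) <= INR (3 * Kn) * (g (c0 + j)%nat - g c0) <= INR j * eps.
Proof.
  intros Hb Hc c0 j H1 H2.
  assert (Dup : forall n, (n + 3 * Kn + 1 <= 9 * Kn)%nat -> INR (3 * Kn) * (g (S n) - g n) <= eps).
  { intros n Hn.
    assert (T := sumN_tele (3 * Kn) n g).
    assert (L : INR (3 * Kn) * (g (S n) - g n) <= sumN (3 * Kn) (fun i => g (n + i + 1)%nat - g (n + i)%nat)).
    { apply sumN_ge_const. intros i Hi.
      replace (n + i + 1)%nat with (S (n + i)) by lia.
      apply (D_mono g Kn Hc); lia. }
    assert (B1 := Hb (n + 3 * Kn)%nat ltac:(lia)). assert (B2 := Hb n ltac:(lia)). lra. }
  assert (Dlo : forall n, (3 * Kn <= n + 1)%nat -> (n + 2 <= 9 * Kn)%nat -> - eps <= INR (3 * Kn) * (g (S n) - g n)).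
  { intros n Hn1 Hn2.
    set (c := (n + 1 - 3 * Kn)%nat).
    assert (T := sumN_tele (3 * Kn) c g).
    assert (L : sumN (3 * Kn) (fun i => g (c + i + 1)%nat - g (c + i)%nat) <= INR (3 * Kn) * (g (S n) - g n)).
    { apply sumN_le_const. intros i Hi.
      replace (c + i + 1)%nat with (S (c + i)) by lia.
      apply (D_mono g Kn Hc); unfold c; lia. }
    replace (c + 3 * Kn)%nat with (S n) in T by (unfold c; lia).
    assert (B1 := Hb (S n) ltac:(lia)). assert (B2 := Hb c ltac:(unfold c; lia)). lra. }
  assert (T := sumN_tele j c0 g).
  rewrite <- T, <- sumN_scal.
  split.
  - assert (Hs : INR j * (- (eps)) <= sumN j (fun i => INR (3 * Kn) * (g (c0 + i + 1)%nat - g (c0 + i)%nat))).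
    { apply sumN_ge_const. intros i Hi. replace (c0 + i + 1)%nat with (S (c0 + i)) by lia.
      apply Dlo; lia. }
    lra.
  - apply sumN_le_const. intros i Hi. replace (c0 + i + 1)%nat with (S (c0 + i)) by lia.
    apply Dup; lia.
Qed.

Lemma second_diff_sum (g : nat -> R) (Kn j : nat) (r eps : R) :
  (forall n, (n <= 9 * Kn)%nat -> r <= g n <= r + eps) ->
  (forall n, (n + 2 <= 9 * Kn)%nat -> 2 * g (S n) <= g n + g (S (S n))) ->
  (1 <= j <= Kn)%nat ->
  INR (3 * Kn) * sumN (S Kn) (fun k => g (4 * Kn + k + j)%nat + g (4 * Kn + k - j)%nat - 2 * g (4 * Kn + k)%nat)
   <= 2 * INR j * INR j * eps.
Proof.
  intros Hb Hc Hj.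
  assert (W := window_bound g Kn r eps Hb Hc).
  rewrite (sumN_ext _ _ (fun k => (g (4 * Kn + k + j)%nat - g (4 * Kn + k)%nat)
        - (g ((4 * Kn - j) + k + j)%nat - g ((4 * Kn - j) + k)%nat))).
  2: { intros i Hi. replace ((4 * Kn - j) + i + j)%nat with (4 * Kn + i)%nat by lia.
       replace ((4 * Kn - j) + i)%nat with (4 * Kn + i - j)%nat by lia. ring. }
  rewrite sumN_minus, (sumN_shift (S Kn) j (4 * Kn)), (sumN_shift (S Kn) j (4 * Kn - j)), <- sumN_minus, <- sumN_scal.
  replace (2 * INR j * INR j * eps) with (INR j * (2 * INR j * eps)) by ring.
  apply sumN_le_const. intros i Hi.
  assert (A1 := W (4 * Kn - j + i + S Kn)%nat j ltac:(lia) ltac:(lia)).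
  assert (A2 := W (4 * Kn - j + i)%nat j ltac:(lia) ltac:(lia)).
  replace (4 * Kn - j + i + S Kn + j)%nat with (4 * Kn + i + S Kn)%nat in A1 by lia.
  replace (4 * Kn - j + i + j)%nat with (4 * Kn + i)%nat in A2 by lia.
  lra.
Qed.


Lemma seg_coords (A1 A2 B1 B2 X1 X2 : R) :
  segment (A1, A2) (B1, B2) (X1, X2) <->
  exists t, 0 <= t <= 1 /\ X1 = A1 + t * (B1 - A1) /\ X2 = A2 + t * (B2 - A2).
Proof.
  unfold segment, padd, pscal, psub; simpl. split.
  - intros [t [Ht E]]. apply pair_equal_spec in E. exists t; tauto.
  - intros [t [Ht [E1 E2]]]. exists t. split; auto. rewrite E1, E2; auto.
Qed.

Lemma ptZ_inj (z w : Z * Z) : ptZ z = ptZ w -> z = w.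
Proof.
  destruct z, w; unfold ptZ; simpl. intros H. apply pair_equal_spec in H. destruct H as [H1 H2].
  apply eq_IZR in H1, H2. subst; auto.
Qed.

Lemma lattice_on_line (a b p q z : Z * Z) :
  consecutive (ptZ a) (ptZ b) p q -> segment (ptZ a) (ptZ b) (ptZ z) ->
  exists n : Z, z = (fst p + n * (fst q - fst p), snd p + n * (snd q - snd p))%Z.
Proof.
  destruct a as [a1 a2], b as [b1 b2], p as [p1 p2], q as [q1 q2], z as [z1 z2].
  unfold consecutive. unfold ptZ; simpl.
  intros [Sp [Sq [Hpq Hno]]] Sz.
  apply seg_coords in Sp as [tp [Htp [P1 P2]]].
  apply seg_coords in Sq as [tq [Htq [Q1 Q2]]].
  apply seg_coords in Sz as [tz [Htz [Z1 Z2]]].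
  assert (Htpq : tq - tp <> 0).
  { intro E. apply Hpq. assert (tq = tp) by lra. subst tq.
    f_equal; apply eq_IZR; lra. }
  set (u := (tz - tp) / (tq - tp)).
  set (n := Int_part u).
  destruct (base_Int_part u) as [B1 B2]. fold n in B1, B2.
  set (f := u - IZR n).
  assert (Hf : 0 <= f < 1) by (unfold f; lra).
  set (w := (z1 - n * (q1 - p1), z2 - n * (q2 - p2))%Z).
  assert (Hu : u * (tq - tp) = tz - tp) by (unfold u; field; auto).
  assert (W1 : IZR (fst w) = IZR p1 + f * (IZR q1 - IZR p1)).
  { unfold w, f; simpl. rewrite minus_IZR, mult_IZR, minus_IZR.
    rewrite Z1, P1, Q1.
    replace ((u - IZR n) * (IZR a1 + tq * (IZR b1 - IZR a1) - (IZR a1 + tp * (IZR b1 - IZR a1))))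
      with (u * (tq - tp) * (IZR b1 - IZR a1) - IZR n * (tq - tp) * (IZR b1 - IZR a1)) by ring.
    rewrite Hu. ring. }
  assert (W2 : IZR (snd w) = IZR p2 + f * (IZR q2 - IZR p2)).
  { unfold w, f; simpl. rewrite minus_IZR, mult_IZR, minus_IZR.
    rewrite Z2, P2, Q2.
    replace ((u - IZR n) * (IZR a2 + tq * (IZR b2 - IZR a2) - (IZR a2 + tp * (IZR b2 - IZR a2))))
      with (u * (tq - tp) * (IZR b2 - IZR a2) - IZR n * (tq - tp) * (IZR b2 - IZR a2)) by ring.
    rewrite Hu. ring. }
  destruct (Req_dec f 0) as [F0|F0].
  - exists n. rewrite F0 in W1, W2. unfold w in W1, W2; simpl in W1, W2.
    rewrite !minus_IZR, !mult_IZR, !minus_IZR in W1, W2. f_equal; apply eq_IZR; rewrite plus_IZR, mult_IZR, minus_IZR; lra.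
  - exfalso.
    assert (Hqp : (IZR q1 - IZR p1) <> 0 \/ (IZR q2 - IZR p2) <> 0).
    { destruct (Req_dec (IZR q1 - IZR p1) 0) as [E1|E1]; [|auto].
      destruct (Req_dec (IZR q2 - IZR p2) 0) as [E2|E2]; [|auto].
      exfalso. apply Hpq. f_equal; apply eq_IZR; lra. }
    apply (Hno w).
    + destruct w as [w1 w2] eqn:Ew. simpl in W1, W2.
      unfold ptZ; simpl. apply seg_coords. exists (tp + f * (tq - tp)). split; [nra|].
      split; [rewrite W1, P1, Q1 | rewrite W2, P2, Q2]; ring.
    + intro E. rewrite E in W1, W2. simpl in W1, W2.
      destruct Hqp; [apply H; nra| apply H; nra].
    + intro E. rewrite E in W1, W2. simpl in W1, W2.
      destruct Hqp; [apply H; nra| apply H; nra].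
    + exists f. split; [lra|].
      destruct w as [w1 w2]. simpl in W1, W2. unfold padd, pscal, psub; simpl.
      rewrite W1, W2; auto.
Qed.

Definition zk (a e : Z * Z) (k : nat) : Z * Z :=
  (fst a + Z.of_nat k * fst e, snd a + Z.of_nat k * snd e)%Z.


Lemma ptZ_zk a e k : ptZ (zk a e k) = Pt (ptZ a) (ptZ e) (INR k).
Proof.
  unfold zk, ptZ, Pt, padd, pscal; simpl. f_equal; rewrite plus_IZR, mult_IZR, <- INR_IZR_INZ; auto.
Qed.

Lemma Pt_inj A E s t : E <> (0, 0) -> Pt A E s = Pt A E t -> s = t.
Proof.
  destruct A as [A1 A2], E as [E1 E2]; unfold Pt, padd, pscal; simpl.
  intros HE H. apply pair_equal_spec in H as [H1 H2].
  destruct (Req_dec E1 0) as [Z1|Z1].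
  - destruct (Req_dec E2 0) as [Z2|Z2]; [subst; tauto|].
    apply (Rmult_eq_reg_r E2); auto; lra.
  - apply (Rmult_eq_reg_r E1); auto; lra.
Qed.

Lemma seg_Pt A B X : segment A B X <-> exists t, 0 <= t <= 1 /\ X = Pt A (psub B A) t.
Proof. unfold segment, Pt; tauto. Qed.

Lemma lattice_struct (a b p q : Z * Z) (L : list (Z * Z)) :
  NoDup L -> (forall z, In z L <-> segment (ptZ a) (ptZ b) (ptZ z)) ->
  consecutive (ptZ a) (ptZ b) p q ->
  exists (e : Z * Z) (K : nat),
    Permutation L (map (zk a e) (seq 0 (S K))) /\
    ptZ b = Pt (ptZ a) (ptZ e) (INR K) /\
    nrm (ptZ e) = pdist (ptZ p) (ptZ q) /\ ptZ e <> (0,0).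
Proof.
  intros HND HL Hc.
  assert (Hc' := Hc). destruct Hc' as [Sp [Sq [Hpq _]]].
  set (e0 := (fst q - fst p, snd q - snd p)%Z).
  assert (He0 : ptZ e0 <> (0,0)).
  { intro E. apply Hpq. destruct p, q; unfold e0, ptZ in E; simpl in E.
    apply pair_equal_spec in E as [E1 E2]. rewrite minus_IZR in E1, E2.
    f_equal; apply eq_IZR; lra. }
  assert (Hon := fun z => lattice_on_line a b p q z Hc).
  assert (Sa : segment (ptZ a) (ptZ b) (ptZ a)).
  { exists 0. split; [lra|]. destruct a, b; unfold ptZ, padd, pscal, psub; simpl; f_equal; ring. }
  assert (Sb : segment (ptZ a) (ptZ b) (ptZ b)).
  { exists 1. split; [lra|]. destruct a, b; unfold ptZ, padd, pscal, psub; simpl; f_equal; ring. }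
  destruct (Hon a Sa) as [na Ea]. destruct (Hon b Sb) as [nb Eb].
  set (D := (nb - na)%Z).
  assert (HD : D <> 0%Z).
  { intro HD0. assert (Hab : a = b) by (rewrite Ea, Eb; unfold D in HD0; f_equal; f_equal; lia).
    apply Hpq. apply ptZ_inj.
    destruct Sp as [t1 [_ E1]], Sq as [t2 [_ E2]].
    rewrite E1, E2, <- Hab. destruct a; unfold ptZ, padd, pscal, psub; simpl. f_equal; ring. }
  set (s := Z.sgn D).
  assert (Hs2 : (s * s = 1)%Z) by (unfold s; destruct D; simpl; lia).
  assert (HsD : (s * D = Z.abs D)%Z) by (unfold s; destruct D; simpl; lia).
  set (e := (s * fst e0, s * snd e0)%Z).
  set (K := Z.to_nat (Z.abs D)).
  assert (HK : Z.of_nat K = Z.abs D) by (unfold K; rewrite Z2Nat.id; lia).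
  assert (He : ptZ e <> (0,0)).
  { intro E. apply He0. unfold e, e0, ptZ in *; simpl in *.
    apply pair_equal_spec in E as [E1 E2]. rewrite !mult_IZR in E1, E2.
    assert (IZR s <> 0) by (intro Z0; apply eq_IZR in Z0; rewrite Z0 in Hs2; lia).
    f_equal; [apply (Rmult_eq_reg_l (IZR s)); auto; lra | apply (Rmult_eq_reg_l (IZR s)); auto; lra]. }
  assert (Hline : forall n : Z, (fst p + n * (fst q - fst p), snd p + n * (snd q - snd p))%Z
                          = (fst a + (s * (n - na)) * fst e, snd a + (s * (n - na)) * snd e)%Z).
  { intros n. rewrite Ea. unfold e, e0; simpl.
    f_equal; [replace (s * (n - na) * (s * (fst q - fst p)))%Z with ((s * s) * ((n - na) * (fst q - fst p)))%Z by ring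
             | replace (s * (n - na) * (s * (snd q - snd p)))%Z with ((s * s) * ((n - na) * (snd q - snd p)))%Z by ring];
    rewrite Hs2; ring. }
  assert (HbK : b = zk a e K).
  { unfold zk. rewrite HK. rewrite Eb, Hline. f_equal; f_equal; f_equal; unfold D in HsD; lia. }
  assert (HbPt : ptZ b = Pt (ptZ a) (ptZ e) (INR K)) by (rewrite HbK; apply ptZ_zk).
  exists e, K. split; [|split; [auto|split; auto]].
  - apply NoDup_Permutation; auto.
    + apply FinFun.Injective_map_NoDup; [|apply seq_NoDup].
      intros k1 k2 E. assert (E' : ptZ (zk a e k1) = ptZ (zk a e k2)) by (rewrite E; auto).
      rewrite !ptZ_zk in E'. apply Pt_inj in E'; auto. apply INR_eq; auto.
    + intros z. rewrite HL. split.
      * intros Sz. destruct (Hon z Sz) as [n En]. rewrite Hline in En.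
        set (m := (s * (n - na))%Z) in En.
        apply seg_Pt in Sz as [t [Ht Et]].
        assert (Ez : ptZ z = Pt (ptZ a) (ptZ e) (IZR m)).
        { rewrite En. destruct a, e; unfold ptZ, Pt, padd, pscal; simpl; f_equal; rewrite plus_IZR, mult_IZR; ring. }
        assert (Et' : ptZ z = Pt (ptZ a) (ptZ e) (t * INR K)).
        { rewrite Et, HbPt. destruct a, e; unfold ptZ, Pt, padd, pscal, psub; simpl; f_equal; ring. }
        rewrite Ez in Et'. apply Pt_inj in Et'; auto.
        assert (HKp : 0 <= INR K) by apply pos_INR.
        assert (Hm0 : (0 <= m)%Z) by (apply le_IZR; nra).
        assert (HmK : (m <= Z.of_nat K)%Z) by (apply le_IZR; rewrite <- INR_IZR_INZ; nra).
        apply in_map_iff. exists (Z.to_nat m). split.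
        -- rewrite En. unfold zk. rewrite Z2Nat.id by lia. auto.
        -- apply in_seq. lia.
      * intros Hin. apply in_map_iff in Hin as [k [Ek Hk]]. apply in_seq in Hk.
        subst z. apply seg_Pt.
        assert (HK0 : (0 < K)%nat).
        { unfold K. lia. }
        assert (0 < INR K) by (apply lt_0_INR; lia).
        assert (INR k <= INR K) by (apply le_INR; lia).
        exists (INR k / INR K). split.
        { split; [unfold Rdiv; apply Rmult_le_pos; [apply pos_INR| apply Rlt_le, Rinv_0_lt_compat; auto]|].
          apply (Rmult_le_reg_r (INR K)); auto. unfold Rdiv; rewrite Rmult_assoc, Rinv_l; lra. }
        rewrite ptZ_zk, HbPt. destruct a, e; unfold ptZ, Pt, padd, pscal, psub; simpl; f_equal; field; lra.
  - unfold pdist, nrm. f_equal.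
    assert (Hs2R : IZR s * IZR s = 1) by (rewrite <- mult_IZR, Hs2; auto).
    unfold e, e0, ptZ, psub, dot; destruct p as [p1 p2], q as [q1 q2]; simpl.
    rewrite !mult_IZR, !minus_IZR.
    replace (IZR s * (IZR q1 - IZR p1) * (IZR s * (IZR q1 - IZR p1)) +
      IZR s * (IZR q2 - IZR p2) * (IZR s * (IZR q2 - IZR p2)))
      with ((IZR s * IZR s) * ((IZR q1 - IZR p1) * (IZR q1 - IZR p1) + (IZR q2 - IZR p2) * (IZR q2 - IZR p2))) by ring.
    rewrite Hs2R. ring.
Qed.


Lemma exp_le x y : x <= y -> exp x <= exp y.
Proof. intros H. destruct (Req_dec x y) as [->|]; [lra|]. apply Rlt_le, exp_increasing; lra. Qed.

Lemma Rpower_exp x y : 0 < x -> Rpower x y = exp (y * ln x).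
Proof. intros; unfold Rpower; auto. Qed.

Lemma sqrt_exp x : 0 < x -> sqrt x = exp (/2 * ln x).
Proof. intros H. rewrite <- Rpower_sqrt by auto. unfold Rpower. f_equal. Qed.

Lemma ln_div' x y : 0 < x -> 0 < y -> ln (x / y) = ln x - ln y.
Proof. intros. unfold Rdiv. rewrite ln_mult, ln_Rinv by (auto; apply Rinv_0_lt_compat; auto). ring. Qed.

Lemma final_arith (R0 r h d N lhs c1 c2 : R) :
  0 < r -> r <= R0 -> 0 < h -> 1 <= d -> 0 < N -> 0 <= c1 -> 0 <= c2 ->
  lhs <= c1 * N ->
  lhs <= c2 * (sqrt (r / h) / d + sqrt (R0 * r) / (h * d * N)) ->
  let T := Rpower R0 (3/4) * Rpower d (1/2) * Rpower h (-(1/2)) * Rpower r (-(1/4)) in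
  (N <= T -> lhs <= (c1 + 2 * c2 + 1) * Rpower (R0 * r / (h ^ 2 * d ^ 2)) (1/4)) /\
  (T <= N -> lhs <= (c1 + 2 * c2 + 1) * Rpower (r * N / (h * d ^ 2)) (1/3)).
Proof.
  intros Hr HrR Hh Hd HN Hc1 Hc2 B1 B2 T.
  assert (HR : 0 < R0) by lra. assert (Hd0 : 0 < d) by lra.
  set (lR := ln R0). set (lr := ln r). set (lh := ln h). set (ld := ln d). set (lN := ln N).
  assert (Hlr : lr <= lR) by (unfold lr, lR; destruct (Req_dec r R0) as [->|]; [lra| apply Rlt_le, ln_increasing; lra]).
  assert (Hld : 0 <= ld) by (unfold ld; rewrite <- ln_1; destruct (Req_dec 1 d) as [<-|]; [lra| apply Rlt_le, ln_increasing; lra]).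
  assert (EN : N = exp lN) by (unfold lN; rewrite exp_ln; auto).
  assert (EW : sqrt (r / h) / d = exp ((lr - lh) / 2 - ld)).
  { rewrite sqrt_exp by (apply Rdiv_lt_0_compat; auto).
    replace ((lr - lh) / 2 - ld) with (/ 2 * ln (r / h) + - ld).
    - rewrite exp_plus, exp_Ropp. unfold ld. rewrite exp_ln by auto. field. lra.
    - unfold Rdiv at 1. rewrite ln_mult, ln_Rinv by (auto; apply Rinv_0_lt_compat; auto). unfold lr, lh. field. }
  assert (EX : sqrt (R0 * r) / (h * d * N) = exp ((lR + lr) / 2 - lh - ld - lN)).
  { rewrite sqrt_exp by nra.
    replace ((lR + lr) / 2 - lh - ld - lN) with (/ 2 * ln (R0 * r) + - lh + - ld + - lN).
    - rewrite !exp_plus, !exp_Ropp. unfold lh, ld, lN. rewrite !exp_ln by auto. field. repeat split; lra.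
    - rewrite ln_mult by auto. unfold lR, lr. field. }
  assert (ET : T = exp (3/4 * lR + 1/2 * ld - 1/2 * lh - 1/4 * lr)).
  { unfold T. rewrite !Rpower_exp by auto. rewrite <- !exp_plus. f_equal. unfold lR, ld, lh, lr. ring. }
  assert (Hh2 : 0 < h ^ 2) by (apply pow_lt; auto).
  assert (Hd2 : 0 < d ^ 2) by (apply pow_lt; auto).
  assert (EQ : Rpower (R0 * r / (h ^ 2 * d ^ 2)) (1/4) = exp ((lR + lr - 2 * lh - 2 * ld) / 4)).
  { rewrite Rpower_exp by (apply Rdiv_lt_0_compat; nra).
    f_equal. rewrite ln_div', ln_mult, ln_mult, !ln_pow by nra.
    unfold lR, lr, lh, ld. simpl. field. }
  assert (EZ : Rpower (r * N / (h * d ^ 2)) (1/3) = exp ((lr + lN - lh - 2 * ld) / 3)).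
  { rewrite Rpower_exp by (apply Rdiv_lt_0_compat; nra).
    f_equal. rewrite ln_div', ln_mult, ln_mult, !ln_pow by nra.
    unfold lN, lr, lh, ld. simpl. field. }
  rewrite EW, EX in B2. rewrite EN in B1. rewrite EQ, EZ. unfold T in *. rewrite ET.
  assert (P1 : 0 <= exp ((lR + lr - 2 * lh - 2 * ld) / 4)) by (apply Rlt_le, exp_pos).
  assert (P2 : 0 <= exp ((lr + lN - lh - 2 * ld) / 3)) by (apply Rlt_le, exp_pos).
  assert (P3 := exp_pos lN).
  assert (P4 := exp_pos ((lr - lh) / 2 - ld)).
  assert (P5 := exp_pos ((lR + lr) / 2 - lh - ld - lN)).
  split; intros HT; rewrite EN in HT.
  - set (Q := exp ((lR + lr - 2 * lh - 2 * ld) / 4)) in *.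
    assert (W1 : exp ((lr - lh) / 2 - ld) <= Q) by (apply exp_le; lra).
    destruct (Rle_or_lt lN ((lR + lr - 2 * lh - 2 * ld) / 4)) as [H|H].
    + assert (exp lN <= Q) by (apply exp_le; lra). nra.
    + assert (exp ((lR + lr) / 2 - lh - ld - lN) <= Q) by (apply exp_le; lra). nra.
  - set (Z := exp ((lr + lN - lh - 2 * ld) / 3)) in *.
    assert (HT' : 3/4 * lR + 1/2 * ld - 1/2 * lh - 1/4 * lr <= lN).
    { destruct (Rle_or_lt (3/4 * lR + 1/2 * ld - 1/2 * lh - 1/4 * lr) lN); auto.
      exfalso. assert (exp lN < exp (3/4 * lR + 1/2 * ld - 1/2 * lh - 1/4 * lr)) by (apply exp_increasing; auto). lra. }
    assert (X1 : exp ((lR + lr) / 2 - lh - ld - lN) <= Z) by (apply exp_le; lra).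
    destruct (Rle_or_lt lN ((lr - lh) / 2 - ld)) as [H|H].
    + assert (exp lN <= Z) by (apply exp_le; lra). nra.
    + assert (exp ((lr - lh) / 2 - ld) <= Z) by (apply exp_le; lra). nra.
Qed.

Lemma div_le_div a b c e : 0 < b -> 0 < e -> a * e <= c * b -> a / b <= c / e.
Proof.
  intros Hb He H. apply (Rmult_le_reg_r (b * e)); [nra|].
  replace (a / b * (b * e)) with (a * e) by (field; lra).
  replace (c / e * (b * e)) with (c * b) by (field; lra). auto.
Qed.

Lemma core_ineq (K N j sR sh : R) : 9 <= K -> N = K + 1 -> 0 < sh -> 0 < sR -> 1 <= j ->
  ((j * sR <= K * sh /\ K * sh <= 2 * j * sR) \/ (j = 1 /\ K * sh < sR)) ->
  sR * (2 * j / (3 * (sh * sh) * K) + 2 * N / ((sR * sR) * j)) <= 6 * (1 / sh + sR / ((sh * sh) * N)).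
Proof.
  intros HK HN Hsh HsR Hj Hc.
  assert (HNp : 0 < N) by lra.
  rewrite Rmult_plus_distr_l, Rmult_plus_distr_l.
  destruct Hc as [[C1 C2]|[-> C2]].
  - assert (A1 : sR * (2 * j / (3 * (sh * sh) * K)) <= 2 / 3 * (1 / sh)).
    { replace (sR * (2 * j / (3 * (sh * sh) * K))) with ((2 * j * sR) / (3 * (sh * sh) * K)) by (field; lra).
      replace (2 / 3 * (1 / sh)) with (2 / (3 * sh)) by (field; lra).
      apply div_le_div; [nra|nra|]. nra. }
    assert (A2 : sR * (2 * N / ((sR * sR) * j)) <= 40 / 9 * (1 / sh)).
    { replace (sR * (2 * N / ((sR * sR) * j))) with ((2 * N) / (sR * j)) by (field; lra).
      replace (40 / 9 * (1 / sh)) with (40 / (9 * sh)) by (field; lra).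
      apply div_le_div; [nra|nra|]. nra. }
    assert (0 <= sR / ((sh * sh) * N)) by (apply Rlt_le, Rdiv_lt_0_compat; nra).
    assert (0 < 1 / sh) by (apply Rdiv_lt_0_compat; lra).
    lra.
  - assert (A1 : sR * (2 * 1 / (3 * (sh * sh) * K)) <= 6 * (sR / ((sh * sh) * N))).
    { replace (sR * (2 * 1 / (3 * (sh * sh) * K))) with ((2 * sR) / (3 * (sh * sh) * K)) by (field; lra).
      replace (6 * (sR / ((sh * sh) * N))) with ((6 * sR) / ((sh * sh) * N)) by (field; lra).
      apply div_le_div; [nra|nra|]. rewrite HN. assert (0 < sR * (sh * sh)) by (apply Rmult_lt_0_compat; nra).
      replace (2 * sR * (sh * sh * (K + 1))) with ((sR * (sh * sh)) * (2 * K + 2)) by ring.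
      replace (6 * sR * (3 * (sh * sh) * K)) with ((sR * (sh * sh)) * (18 * K)) by ring.
      apply Rmult_le_compat_l; lra. }
    assert (A2 : sR * (2 * N / ((sR * sR) * 1)) <= 6 * (1 / sh)).
    { replace (sR * (2 * N / ((sR * sR) * 1))) with ((2 * N) / sR) by (field; lra).
      replace (6 * (1 / sh)) with (6 / sh) by (field; lra).
      apply div_le_div; [nra|nra|]. nra. }
    lra.
Qed.

Lemma choose_j (K : nat) (sR sh : R) : (9 <= K)%nat -> 0 < sh <= sR ->
  exists j : nat, (1 <= j <= K)%nat /\
   ((INR j * sR <= INR K * sh /\ INR K * sh <= 2 * INR j * sR) \/ (INR j = 1 /\ INR K * sh < sR)).
Proof.
  intros HK Hs.
  assert (HKr : 9 <= INR K) by (replace 9 with (INR 9) by (simpl; ring); apply le_INR; auto).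
  set (x := INR K * sh / sR).
  assert (Hx : x * sR = INR K * sh) by (unfold x; field; lra).
  destruct (Rlt_or_le x 1) as [Hx1|Hx1].
  - exists 1%nat. split; [lia|]. right. split; [simpl; auto|]. nra.
  - destruct (base_Int_part x) as [B1 B2].
    set (n := Int_part x) in *.
    assert (Hn0 : 0 < IZR n) by lra.
    assert (Hn1 : (1 <= n)%Z) by (assert (0 < n)%Z by (apply lt_IZR; auto); lia).
    exists (Z.to_nat n).
    assert (E : INR (Z.to_nat n) = IZR n) by (rewrite INR_IZR_INZ, Z2Nat.id; auto; lia).
    assert (HxK : x <= INR K) by (unfold x; apply (Rmult_le_reg_r sR); [lra|]; unfold Rdiv; rewrite Rmult_assoc, Rinv_l by lra; nra).
    split.
    + split; [lia|]. apply INR_le. rewrite E. lra.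
    + left. rewrite E. assert (IZR n * sR <= x * sR) by (apply Rmult_le_compat_r; lra).
      assert (1 <= IZR n) by (apply IZR_le in Hn1; auto). assert (x * sR <= (2 * IZR n) * sR) by (apply Rmult_le_compat_r; lra). lra.
Qed.


Lemma sum_list_perm f (l1 l2 : list (Z * Z)) : Permutation l1 l2 -> sum_list f l1 = sum_list f l2.
Proof. induction 1; simpl; lra. Qed.

Lemma sum_list_app f (l1 l2 : list (Z * Z)) : sum_list f (l1 ++ l2) = sum_list f l1 + sum_list f l2.
Proof. induction l1; simpl; lra. Qed.

Lemma sum_list_map_seq f (phi : nat -> Z * Z) n :
  sum_list f (map phi (seq 0 n)) = sumN n (fun k => f (phi k)).
Proof.
  induction n; [simpl; auto|].
  rewrite seq_S, map_app, sum_list_app, IHn. simpl sumN. simpl. lra.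
Qed.

Lemma nrm_ptZ_ge1 z : ptZ z <> (0,0) -> 1 <= nrm (ptZ z).
Proof.
  destruct z as [z1 z2]. unfold ptZ, nrm, dot; simpl. intros H.
  assert (Hz : (1 <= z1 * z1 + z2 * z2)%Z).
  { destruct (Z.eq_dec z1 0) as [->|H1]; destruct (Z.eq_dec z2 0) as [->|H2]; try nia.
    exfalso; apply H; auto. }
  apply IZR_le in Hz. rewrite plus_IZR, !mult_IZR in Hz.
  rewrite <- sqrt_1. apply sqrt_le_1_alt. lra.
Qed.

Lemma mu_hmu O K0 l R0 : (forall theta delta, nrm theta = 1 -> 0 < delta -> / sqrt delta * mu O theta delta <= K0) ->
  0 < nrm l -> 0 < R0 ->
  mu O (pscal (/ nrm l) l) (/ (R0 * nrm l)) <= K0 * sqrt (/ (R0 * nrm l)).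
Proof.
  intros H Hl HR.
  assert (Hd : 0 < / (R0 * nrm l)) by (apply Rinv_0_lt_compat; nra).
  assert (Hs : 0 < sqrt (/ (R0 * nrm l))) by (apply sqrt_lt_R0; auto).
  assert (Hn : nrm (pscal (/ nrm l) l) = 1).
  { rewrite nrm_pscal, Rabs_right by (apply Rle_ge, Rlt_le, Rinv_0_lt_compat; auto). field; lra. }
  specialize (H _ _ Hn Hd).
  apply (Rmult_le_compat_l (sqrt (/ (R0 * nrm l)))) in H; [|lra].
  rewrite <- Rmult_assoc, Rinv_r, Rmult_1_l in H by lra. lra.
Qed.

Lemma main_fin (K j R0 r h c d SG lhs : R) :
  9 <= K -> 1 <= j -> 0 < c -> 1 <= d -> 0 < r -> 0 < h -> h <= R0 ->
  ((j * sqrt R0 <= K * sqrt h /\ K * sqrt h <= 2 * j * sqrt R0) \/ (j = 1 /\ K * sqrt h < sqrt R0)) ->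
  3 * K * SG <= 2 * j * j / h ->
  lhs <= sqrt (R0 * r) * ((SG + (K + 1) * (2 / R0)) / (j * c * d)) ->
  lhs <= 6 / c * (sqrt (r / h) / d + sqrt (R0 * r) / (h * d * (K + 1))).
Proof.
  intros HK Hj Hc Hd Hr Hh HhR Hjc HSG Hl.
  assert (HR : 0 < R0) by lra.
  set (sR := sqrt R0) in *. set (sh := sqrt h) in *. set (sr := sqrt r).
  assert (HsR : 0 < sR) by (apply sqrt_lt_R0; lra).
  assert (Hsh : 0 < sh) by (apply sqrt_lt_R0; lra).
  assert (Hsr : 0 < sr) by (apply sqrt_lt_R0; lra).
  assert (ER : R0 = sR * sR) by (unfold sR; rewrite sqrt_sqrt; lra).
  assert (Eh : h = sh * sh) by (unfold sh; rewrite sqrt_sqrt; lra).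
  assert (E1 : sqrt (R0 * r) = sR * sr) by (unfold sR, sr; apply sqrt_mult; lra).
  assert (E2 : sqrt (r / h) = sr / sh) by (unfold sr, sh; apply sqrt_div_alt; lra).
  rewrite E1 in Hl. rewrite E1, E2.
  assert (Hcore := core_ineq K (K + 1) j sR sh HK eq_refl Hsh HsR Hj Hjc).
  assert (HSG' : SG <= 2 * j * j / (3 * K * h)).
  { apply (Rmult_le_reg_l (3 * K)); [lra|]. replace (3 * K * (2 * j * j / (3 * K * h))) with (2 * j * j / h) by (field; lra). auto. }
  assert (Hq : (SG + (K + 1) * (2 / R0)) / (j * c * d) <=
               (2 * j / (3 * (sh * sh) * K) + 2 * (K + 1) / ((sR * sR) * j)) / (c * d)).
  { rewrite <- Eh, <- ER.
    replace ((2 * j / (3 * h * K) + 2 * (K + 1) / (R0 * j)) / (c * d))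
      with ((2 * j * j / (3 * K * h) + (K + 1) * (2 / R0)) / (j * c * d)) by (field; repeat split; lra).
    unfold Rdiv in *. apply Rmult_le_compat_r; [apply Rlt_le, Rinv_0_lt_compat; repeat apply Rmult_lt_0_compat; lra| lra]. }
  eapply Rle_trans; [apply Hl|].
  apply (Rmult_le_compat_l (sR * sr)) in Hq; [|nra].
  eapply Rle_trans; [apply Hq|].
  apply (Rmult_le_compat_l (sr / (c * d))) in Hcore; [|apply Rlt_le, Rdiv_lt_0_compat; nra].
  replace (sR * sr * ((2 * j / (3 * (sh * sh) * K) + 2 * (K + 1) / (sR * sR * j)) / (c * d)))
    with (sr / (c * d) * (sR * (2 * j / (3 * (sh * sh) * K) + 2 * (K + 1) / (sR * sR * j)))) by (field; repeat split; lra).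
  eapply Rle_trans; [apply Hcore|].
  right. rewrite Eh. field. repeat split; lra.
Qed.

Lemma Rdiv_le_0_compat_alt a b : 0 <= a -> 0 < b -> 0 <= a / b.
Proof. intros. unfold Rdiv. apply Rmult_le_pos; auto. apply Rlt_le, Rinv_0_lt_compat; auto. Qed.


Theorem lemma6p1 (Omega : pt -> Prop)
  (Hopen : is_open Omega) (Hconv : is_convex Omega) (Hbdd : is_bounded Omega)
  (H0 : Omega (0, 0))
  (Hmu : exists K, forall theta delta, nrm theta = 1 -> 0 < delta ->
           / sqrt delta * mu Omega theta delta <= K) :
  exists C, 0 < C /\
  forall (r R0 h : R) (a b : Z * Z) (L : list (Z * Z)) (p q : Z * Z),
    10 <= r -> r <= R0 ->
    sqrt R0 <= h -> h <= R0 ->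
    NoDup L ->
    (forall z, In z L <-> segment (ptZ a) (ptZ b) (ptZ z)) ->
    (10 <= length L)%nat ->
    (forall x, dilate9 (ptZ a) (ptZ b) x -> annulus Omega r h x) ->
    consecutive (ptZ a) (ptZ b) p q ->
    let d := pdist (ptZ p) (ptZ q) in
    let cardJ := INR (length L) in
    let T := Rpower R0 (3/4) * Rpower d (1/2) * Rpower h (-(1/2))
             * Rpower r (-(1/4)) in
    let lhs := sqrt (R0 * r) *
       sum_list (fun l => mu Omega (pscal (/ nrm (ptZ l)) (ptZ l)) (/ (R0 * nrm (ptZ l)))) L in
    (cardJ <= T -> lhs <= C * Rpower (R0 * r / (h ^ 2 * d ^ 2)) (1/4)) /\
    (T <= cardJ -> lhs <= C * Rpower (r * cardJ / (h * d ^ 2)) (1/3)).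
Proof.
  destruct Hbdd as [M0 HM0]. destruct Hmu as [K0 HK0].
  destruct (Hopen (0,0) H0) as [r0 [Hr0 Hball]].
  set (M := Rmax M0 1).
  assert (HMp : 0 < M) by (unfold M; assert (H := Rmax_r M0 1); lra).
  assert (HM : bddM Omega M) by (intros y Hy; unfold M; eapply Rle_trans; [apply HM0; auto| apply Rmax_l]).
  set (eps := r0 / 2).
  assert (Heps : 0 < eps) by (unfold eps; lra).
  assert (Hlow : forall x, eps * nrm x <= rho_star Omega x) by (intros; apply (rho_lower Omega M r0); auto).
  set (K1 := Rmax K0 0).
  assert (HK1 : 0 <= K1) by apply Rmax_r.
  set (c := Rmin (1/2) (eps / (8 * M))).
  assert (Hc : 0 < c) by (unfold c; apply Rmin_pos; [lra| apply Rdiv_lt_0_compat; lra]).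
  set (c1 := K1 * sqrt M).
  assert (Hc1 : 0 <= c1) by (unfold c1; apply Rmult_le_pos; auto; apply sqrt_pos).
  set (B := 2 / (9 * eps)).
  assert (HB : 0 < B) by (unfold B; apply Rdiv_lt_0_compat; lra).
  set (w0 := sqrt (10 / B) / B).
  assert (Hw0 : 0 < w0) by (unfold w0; apply Rdiv_lt_0_compat; auto; apply sqrt_lt_R0, Rdiv_lt_0_compat; lra).
  set (c2 := 6 / c + c1 * (1 + 2 / eps) / w0).
  assert (Hc2 : 0 <= c2).
  { unfold c2. assert (0 < 6 / c) by (apply Rdiv_lt_0_compat; lra).
    assert (0 <= c1 * (1 + 2 / eps) / w0); [|lra].
    unfold Rdiv. apply Rmult_le_pos; [apply Rmult_le_pos; auto|apply Rlt_le, Rinv_0_lt_compat; auto].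
    assert (0 < 2 * / eps) by (apply Rmult_lt_0_compat; [lra|apply Rinv_0_lt_compat; lra]). lra. }
  exists (c1 + 2 * c2 + 1). split; [lra|].
  intros r R0 h a b L p q Hr HrR Hh1 Hh2 HND HL HLen H9 Hcons d cardJ T lhs.
  assert (Hh3 : 3 <= h).
  { assert (Hs3 : sqrt (3 * 3) <= sqrt R0) by (apply sqrt_le_1_alt; lra).
    rewrite sqrt_square in Hs3 by lra. lra. }
  destruct (lattice_struct a b p q L HND HL Hcons) as [e [K [Hperm [Hb [Hd He]]]]].
  assert (HlenK : length L = S K) by (rewrite (Permutation_length Hperm), length_map, length_seq; auto).
  assert (HK9 : (9 <= K)%nat) by lia.
  set (A := ptZ a) in *. set (E := ptZ e) in *.
  assert (Hd1 : 1 <= d) by (unfold d; rewrite <- Hd; apply nrm_ptZ_ge1; auto).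
  assert (Hlhs : lhs = sqrt (R0 * r) * sumN (S K) (fun k => mu Omega (pscal (/ nrm (Pt A E (INR k))) (Pt A E (INR k))) (/ (R0 * nrm (Pt A E (INR k)))))).
  { unfold lhs. f_equal. rewrite (sum_list_perm _ _ _ Hperm), sum_list_map_seq.
    apply sumN_ext. intros i Hi. rewrite ptZ_zk. auto. }
  assert (HcJ : cardJ = INR (S K)) by (unfold cardJ; rewrite HlenK; auto).
  assert (HKr : 9 <= INR K) by (replace 9 with (INR 9) by (simpl; ring); apply le_INR; auto).
  assert (Hann : forall t, - 4 * INR K <= t <= 5 * INR K ->
            r <= rho_star Omega (Pt A E t) <= r + / h).
  { intros t Ht. apply H9. fold A. rewrite Hb.
    exists ((t - INR K / 2) / INR K). split.
    - split; [apply (Rmult_le_reg_r (INR K)); [lra|] | apply (Rmult_le_reg_r (INR K)); [lra|]];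
        unfold Rdiv; rewrite ?Rmult_assoc, ?Rinv_l by lra; lra.
    - destruct A, E; unfold Pt, padd, pscal, psub; simpl; f_equal; field; lra. }
  assert (Hlk : forall k, (k <= K)%nat -> r / M <= nrm (Pt A E (INR k)) /\ r <= rho_star Omega (Pt A E (INR k)) <= r + / h).
  { intros k Hk. assert (Hk' : INR k <= INR K) by (apply le_INR; auto).
    assert (Hk0 := pos_INR k).
    assert (Ha := Hann (INR k) ltac:(lra)). split; auto.
    assert (Hu := rho_upper Omega M (Pt A E (INR k)) HM H0).
    apply (Rmult_le_reg_l M); auto. unfold Rdiv. rewrite <- Rmult_assoc, (Rmult_comm M r), Rmult_assoc, Rinv_r by lra. lra. }
  assert (HR0 : 0 < R0) by lra.
  assert (B1 : lhs <= c1 * cardJ).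
  { rewrite Hlhs, HcJ.
    assert (HS : sumN (S K) (fun k => mu Omega (pscal (/ nrm (Pt A E (INR k))) (Pt A E (INR k))) (/ (R0 * nrm (Pt A E (INR k)))))
                 <= INR (S K) * (K1 * sqrt (M / (R0 * r)))).
    { apply sumN_le_const. intros k Hk.
      destruct (Hlk k ltac:(lia)) as [Hn _].
      assert (Hnp : 0 < nrm (Pt A E (INR k))) by (eapply Rlt_le_trans; [|apply Hn]; apply Rdiv_lt_0_compat; lra).
      eapply Rle_trans; [apply (mu_hmu Omega K0); auto|].
      assert (Hsq : sqrt (/ (R0 * nrm (Pt A E (INR k)))) <= sqrt (M / (R0 * r))).
      { apply sqrt_le_1_alt. apply (Rmult_le_reg_l (R0 * nrm (Pt A E (INR k)))); [nra|].
        rewrite Rinv_r by nra.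
        replace (R0 * nrm (Pt A E (INR k)) * (M / (R0 * r))) with (nrm (Pt A E (INR k)) * M / r) by (field; lra).
        apply (Rmult_le_reg_l r); [lra|]. unfold Rdiv. rewrite Rmult_1_r.
        replace (r * (nrm (Pt A E (INR k)) * M * / r)) with (M * nrm (Pt A E (INR k))) by (field; lra).
        apply (Rmult_le_compat_l M) in Hn; [|lra]. unfold Rdiv in Hn.
        rewrite <- Rmult_assoc, (Rmult_comm M r), Rmult_assoc, Rinv_r, Rmult_1_r in Hn by lra. lra. }
      assert (HK01 : K0 <= K1) by apply Rmax_l.
      assert (0 <= sqrt (/ (R0 * nrm (Pt A E (INR k))))) by apply sqrt_pos.
      assert (K0 * sqrt (/ (R0 * nrm (Pt A E (INR k)))) <= K1 * sqrt (/ (R0 * nrm (Pt A E (INR k))))) by (apply Rmult_le_compat_r; auto).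
      assert (K1 * sqrt (/ (R0 * nrm (Pt A E (INR k)))) <= K1 * sqrt (M / (R0 * r))) by (apply Rmult_le_compat_l; auto).
      lra. }
    assert (HRr : 0 < sqrt (R0 * r)) by (apply sqrt_lt_R0; nra).
    apply (Rmult_le_compat_l (sqrt (R0 * r))) in HS; [|lra].
    eapply Rle_trans; [apply HS|].
    rewrite sqrt_div_alt by nra. unfold c1. right. field. lra. }
  assert (HW0 : 0 <= sqrt (r / h) / d) by (apply Rdiv_le_0_compat_alt; [apply sqrt_pos|lra]).
  assert (HX0 : 0 <= sqrt (R0 * r) / (h * d * cardJ)).
  { rewrite HcJ. apply Rdiv_le_0_compat_alt; [apply sqrt_pos|].
    assert (0 < INR (S K)) by (apply lt_0_INR; lia). repeat apply Rmult_lt_0_compat; lra. }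
  assert (HdE : nrm E = d) by (unfold d; rewrite <- Hd; auto).
  assert (B2 : lhs <= c2 * (sqrt (r / h) / d + sqrt (R0 * r) / (h * d * cardJ))).
  { destruct (Rle_or_lt (/ (h * (4 * INR K))) (eps * d / 8)) as [Hmain|Hsm].
    - assert (HsRh : 0 < sqrt h <= sqrt R0) by (split; [apply sqrt_lt_R0; lra| apply sqrt_le_1_alt; lra]).
      destruct (choose_j K (sqrt R0) (sqrt h) HK9 HsRh) as [j [Hj Hjc]].
      assert (Hjr : 1 <= INR j) by (replace 1 with (INR 1) by (simpl; auto); apply le_INR; lia).
      assert (HjK : INR j <= INR K) by (apply le_INR; lia).
      set (P := fun t => rho_star Omega (Pt A E t)).
      assert (Hk : forall k, (k < S K)%nat ->
         mu Omega (pscal (/ nrm (Pt A E (INR k))) (Pt A E (INR k))) (/ (R0 * nrm (Pt A E (INR k))))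
         <= (P (INR k + INR j) + P (INR k - INR j) - 2 * P (INR k) + 2 / R0) / (INR j * c * d)).
      { intros k Hk1.
        destruct (Hlk k ltac:(lia)) as [Hn [Hr1 Hr2]].
        assert (Hkr : INR k <= INR K) by (apply le_INR; lia).
        assert (Hk0 := pos_INR k).
        assert (Hnp : 0 < nrm (Pt A E (INR k))) by (eapply Rlt_le_trans; [|apply Hn]; apply Rdiv_lt_0_compat; lra).
        assert (Hdet := det_lower Omega M A E (INR k) (4 * INR K) r h eps HM H0 HMp Heps ltac:(lra) Hnp ltac:(lra)
                 (Hlow _) Hr1 (proj2 (Hann (INR k + 4 * INR K) ltac:(lra))) (proj2 (Hann (INR k - 4 * INR K) ltac:(lra)))
                 ltac:(rewrite HdE; auto)).
        fold c in Hdet. rewrite HdE in Hdet.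
        assert (Hcdn : 0 < c * d * nrm (Pt A E (INR k))) by (repeat apply Rmult_lt_0_compat; lra).
        assert (Hdet0 : det2 (Pt A E (INR k)) E <> 0).
        { intro Z0. rewrite Z0, Rabs_R0 in Hdet. lra. }
        assert (Hmb := mu_bound Omega M A E (INR k) (INR j) R0 HM H0 HR0 ltac:(lra) Hnp Hdet0).
        eapply Rle_trans; [apply Hmb|].
        assert (HG := rho_conv Omega M A E (INR k) (INR j) HM H0).
        fold P. fold (P (INR k + INR j)) (P (INR k - INR j)) (P (INR k)) in HG.
        set (Q := P (INR k + INR j) + P (INR k - INR j) - 2 * P (INR k) + 2 / R0).
        assert (HQ : 0 <= Q) by (unfold Q; assert (0 < 2 / R0) by (apply Rdiv_lt_0_compat; lra); lra).
        fold (P (INR k + INR j)) (P (INR k - INR j)) (P (INR k)). fold Q.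
        assert (Hda : 0 < Rabs (det2 (Pt A E (INR k)) E)) by lra.
        replace (Q / INR j * nrm (Pt A E (INR k)) / Rabs (det2 (Pt A E (INR k)) E))
          with ((Q / INR j) * (nrm (Pt A E (INR k)) / Rabs (det2 (Pt A E (INR k)) E))) by (field; lra).
        replace (Q / (INR j * c * d)) with ((Q / INR j) * (1 / (c * d))) by (field; repeat split; lra).
        apply Rmult_le_compat_l; [apply Rdiv_le_0_compat_alt; lra|].
        apply div_le_div; [lra| nra|]. lra. }
      set (SG := sumN (S K) (fun k => P (INR k + INR j) + P (INR k - INR j) - 2 * P (INR k))).
      assert (HSG : 3 * INR K * SG <= 2 * INR j * INR j / h).
      { set (g := fun n : nat => P (INR n - 4 * INR K)).
        assert (Hg1 : forall n, (n <= 9 * K)%nat -> r <= g n <= r + / h).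
        { intros n Hn. unfold g, P. apply Hann.
          assert (INR n <= 9 * INR K) by (replace 9 with (INR 9) by (simpl; ring); rewrite <- mult_INR; apply le_INR; auto).
          assert (Hn0 := pos_INR n). lra. }
        assert (Hg2 : forall n, (n + 2 <= 9 * K)%nat -> 2 * g (S n) <= g n + g (S (S n))).
        { intros n Hn. unfold g, P.
          assert (HC := rho_conv Omega M A E (INR (S n) - 4 * INR K) 1 HM H0).
          replace (INR (S n) - 4 * INR K - 1) with (INR n - 4 * INR K) in HC by (rewrite S_INR; ring).
          replace (INR (S n) - 4 * INR K + 1) with (INR (S (S n)) - 4 * INR K) in HC by (rewrite !S_INR; ring).
          auto. }
        assert (Hsd := second_diff_sum g K j r (/ h) Hg1 Hg2 ltac:(lia)).
        replace (INR (3 * K)) with (3 * INR K) in Hsd by (rewrite mult_INR; simpl; ring).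
        replace (2 * INR j * INR j / h) with (2 * INR j * INR j * / h) by (unfold Rdiv; ring).
        replace SG with (sumN (S K) (fun k => g (4 * K + k + j)%nat + g (4 * K + k - j)%nat - 2 * g (4 * K + k)%nat)); auto.
        apply sumN_ext. intros k Hk2. unfold g.
        assert (E4 : INR (4 * K + k) = 4 * INR K + INR k) by (rewrite plus_INR, mult_INR; simpl; ring).
        replace (INR (4 * K + k + j) - 4 * INR K) with (INR k + INR j) by (rewrite plus_INR, E4; ring).
        replace (INR (4 * K + k - j) - 4 * INR K) with (INR k - INR j) by (rewrite minus_INR, E4 by lia; ring).
        replace (INR (4 * K + k) - 4 * INR K) with (INR k) by (rewrite E4; ring).
        auto. }
      assert (HL2 : lhs <= sqrt (R0 * r) * ((SG + (INR K + 1) * (2 / R0)) / (INR j * c * d))).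
      { rewrite Hlhs. apply Rmult_le_compat_l; [apply sqrt_pos|].
        eapply Rle_trans; [apply sumN_le; apply Hk|].
        right. unfold Rdiv. rewrite (sumN_ext _ _ (fun k => / (INR j * c * d) * ((P (INR k + INR j) + P (INR k - INR j) - 2 * P (INR k)) + 2 * / R0))) by (intros; ring).
        rewrite sumN_scal, sumN_plus, sumN_const, S_INR. unfold SG. ring. }
      assert (Hfin := main_fin (INR K) (INR j) R0 r h c d SG lhs HKr Hjr Hc Hd1 ltac:(lra) ltac:(lra) Hh2
                ltac:(destruct Hjc as [Hjc|[Hjc1 Hjc2]]; [left; auto| right; split; auto]) HSG HL2).
      rewrite HcJ, S_INR.
      eapply Rle_trans; [apply Hfin|].
      apply Rmult_le_compat_r.
      + rewrite HcJ, S_INR in HX0. lra.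
      + unfold c2. assert (0 <= c1 * (1 + 2 / eps) / w0); [|lra].
        unfold Rdiv. apply Rmult_le_pos; [|apply Rlt_le, Rinv_0_lt_compat; auto].
        apply Rmult_le_pos; auto. assert (0 < 2 * / eps) by (apply Rmult_lt_0_compat; [lra|apply Rinv_0_lt_compat; lra]). lra.
    - assert (Hp : h * (4 * INR K) * (eps * d) < 8).
      { apply (Rmult_lt_compat_l (h * (4 * INR K))) in Hsm; [|nra].
        rewrite Rinv_r in Hsm by nra. lra. }
      assert (Hq1 : 36 <= 4 * INR K * d) by nra.
      assert (Hq2 : h * 36 * eps <= h * (4 * INR K) * (eps * d)).
      { replace (h * (4 * INR K) * (eps * d)) with ((h * eps) * (4 * INR K * d)) by ring.
        replace (h * 36 * eps) with ((h * eps) * 36) by ring.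
        apply Rmult_le_compat_l; nra. }
      assert (Hq3 : d * 3 * 36 * eps <= h * (4 * INR K) * (eps * d)).
      { replace (h * (4 * INR K) * (eps * d)) with ((d * eps) * (h * (4 * INR K))) by ring.
        replace (d * 3 * 36 * eps) with ((d * eps) * (3 * 36)) by ring.
        apply Rmult_le_compat_l; nra. }
      assert (Hq4 : INR K * eps * 12 <= h * (4 * INR K) * (eps * d)).
      { replace (h * (4 * INR K) * (eps * d)) with ((INR K * eps) * (4 * h * d)) by ring.
        replace (INR K * eps * 12) with ((INR K * eps) * 12) by ring.
        apply Rmult_le_compat_l; nra. }
      assert (HhB : h < B).
      { unfold B. apply (Rmult_lt_reg_r (9 * eps)); [lra|]. unfold Rdiv. rewrite Rmult_assoc, Rinv_l by lra. lra. }
      assert (HdB : d < B).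
      { unfold B. apply (Rmult_lt_reg_r (9 * eps)); [lra|]. unfold Rdiv. rewrite Rmult_assoc, Rinv_l by lra. lra. }
      assert (HKe : INR K * eps < 2) by lra.
      assert (HN : cardJ <= 1 + 2 / eps).
      { rewrite HcJ, S_INR. assert (INR K < 2 / eps); [|lra].
        apply (Rmult_lt_reg_r eps); [lra|]. unfold Rdiv. rewrite Rmult_assoc, Rinv_l by lra. lra. }
      assert (HWw : w0 <= sqrt (r / h) / d).
      { unfold w0. apply Rle_trans with (sqrt (r / h) / B).
        - unfold Rdiv at 1 3. apply Rmult_le_compat_r; [apply Rlt_le, Rinv_0_lt_compat; auto|].
          apply sqrt_le_1_alt. apply Rle_trans with (10 / h).
          + unfold Rdiv. apply Rmult_le_compat_l; [lra|]. apply Rinv_le_contravar; lra.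
          + unfold Rdiv. apply Rmult_le_compat_r; [apply Rlt_le, Rinv_0_lt_compat; lra| lra].
        - unfold Rdiv. apply Rmult_le_compat_l; [apply sqrt_pos|]. apply Rinv_le_contravar; lra. }
      eapply Rle_trans; [apply B1|].
      apply Rle_trans with (c1 * (1 + 2 / eps)).
      { apply Rmult_le_compat_l; auto. }
      apply Rle_trans with ((c1 * (1 + 2 / eps) / w0) * (sqrt (r / h) / d)).
      { replace (c1 * (1 + 2 / eps)) with ((c1 * (1 + 2 / eps) / w0) * w0) at 1 by (field; lra).
        apply Rmult_le_compat_l; auto.
        unfold Rdiv. apply Rmult_le_pos; [|apply Rlt_le, Rinv_0_lt_compat; auto].
        apply Rmult_le_pos; auto. assert (0 < 2 * / eps) by (apply Rmult_lt_0_compat; [lra|apply Rinv_0_lt_compat; lra]). lra. }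
      assert (c1 * (1 + 2 / eps) / w0 <= c2).
      { unfold c2. assert (0 < 6 / c) by (apply Rdiv_lt_0_compat; lra). lra. }
      assert (0 <= c1 * (1 + 2 / eps) / w0).
      { unfold Rdiv. apply Rmult_le_pos; [|apply Rlt_le, Rinv_0_lt_compat; auto].
        apply Rmult_le_pos; auto. assert (0 < 2 * / eps) by (apply Rmult_lt_0_compat; [lra|apply Rinv_0_lt_compat; lra]). lra. }
      nra. }
  apply (final_arith R0 r h d cardJ lhs c1 c2); auto; try lra.
  rewrite HcJ. apply lt_0_INR. lia.
Qed.
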